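(* Let $Q$ be a locally point symmetric convex polytope in $\mathbb{R}^D$ with vertices in $\mathbb{Z}^D$, and let $A\subset L(Q)$. Let $\mathbf{v}_1$ and $\mathbf{v}_2$ be a pair of strictly antipodal vertices of $Q$, and let $E_1$ and $E_2$ be parallel edges of $Q$ with $\mathbf{v}_1 \in E_1$ and $\mathbf{v}_2 \in E_2$. Suppose $A\cap E_1 = T_{E_1}(S_1)$ and $A\cap E_2 = T_{E_2}(S_2)$, where $S_1,S_2\subset\mathbb{Z}$ and $T_{E_1},T_{E_2}:\mathbb{R}\to\mathbb{R}^D$ are injective affine transformations with the same associated linear transformation. Then there exists an injective affine transformation $T_{E_2-E_1}:\mathbb{R}\to\mathbb{R}^D$ with $$(A-A)\cap (E_2-E_1) = T_{E_2-E_1}(S_2-S_1).$$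
   Context: $L(Q) = Q\cap\mathbb{Z}^D$. For sets $X,Y$, $X-Y=\{x-y: x\in X,y\in Y\}$. Two vertices $\mathbf{u},\mathbf{v}$ of a convex polytope $Q$ are strictly antipodal if there exist parallel supporting hyperplanes $H_1,H_2$ of $Q$ with $H_1\cap Q=\{\mathbf{u}\}$ and $H_2 \cap Q = \{\mathbf{v}\}$. The supporting cone of $Q$ at a vertex $\mathbf{v}$ is $C(\mathbf{v}) = \mathbf{v} + \bigcup_{\lambda \ge 0}\lambda(Q - \mathbf{v})$. A convex polytope $Q$ with $m$ vertices is locally point symmetric if its vertices can be partitioned into $m/2$ pairs of strictly antipodal vertices such that for each pair $\{\mathbf{u},\mathbf{v}\}$, $C(\mathbf{u}) - \mathbf{u} = \mathbf{v} - C(\mathbf{v})$. *)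

(* Defs.v *)
From HB Require Import structures.
From mathcomp Require Import all_boot all_order all_algebra.
From mathcomp Require Import boolp classical_sets reals.
Set Implicit Arguments. Unset Strict Implicit. Unset Printing Implicit Defensive.
Import Order.TTheory GRing.Theory Num.Theory.
Local Open Scope ring_scope.
Local Open Scope classical_set_scope.

Section Defs.
Variables (R : realType) (D : nat).
Notation pt := 'rV[R]_D.

Definition dot (c x : pt) : R := \sum_(i < D) c 0 i * x 0 i.

Definition intpt (x : pt) : Prop := forall i : 'I_D, exists z : int, x 0 i = z%:~R.

Definition latpts (Q : set pt) : set pt := [set x | Q x /\ intpt x].

Definition conv (V : seq pt) : set pt :=
  [set x | exists w : 'I_(size V) -> R,
     (forall i, 0 <= w i) /\ \sum_i w i = 1 /\ x = \sum_i w i *: V`_i].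

Definition is_polytope (Q : set pt) : Prop := exists V : seq pt, Q = conv V.

Definition is_vertex (Q : set pt) (v : pt) : Prop :=
  Q v /\ exists c : pt, c != 0 /\ forall x, Q x -> x != v -> dot c x < dot c v.

Definition segment (a b : pt) : set pt :=
  [set x | exists t : R, 0 <= t <= 1 /\ x = (1 - t) *: a + t *: b].

Definition is_edge (Q : set pt) (E : set pt) : Prop :=
  (exists a b : pt, a != b /\ E = segment a b) /\
  exists (c : pt) (beta : R), c != 0 /\ (forall x, Q x -> dot c x <= beta) /\
     E = [set x | Q x /\ dot c x = beta].

Definition parallel_edges (E1 E2 : set pt) : Prop :=
  exists (a1 b1 a2 b2 : pt) (mu : R),
    E1 = segment a1 b1 /\ E2 = segment a2 b2 /\ a1 != b1 /\ a2 != b2 /\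
    mu != 0 /\ b1 - a1 = mu *: (b2 - a2).

Definition strictly_antipodal (Q : set pt) (u v : pt) : Prop :=
  Q u /\ Q v /\ exists c : pt, c != 0 /\
    (forall x, Q x -> x != u -> dot c x < dot c u) /\
    (forall x, Q x -> x != v -> dot c v < dot c x).

Definition supp_cone (Q : set pt) (v : pt) : set pt :=
  [set x | exists (lam : R) (q : pt), 0 <= lam /\ Q q /\ x = v + lam *: (q - v)].

Definition mdiff (T : zmodType) (X Y : set T) : set T :=
  [set z | exists x y, X x /\ Y y /\ z = x - y].

(* locally point symmetric: the vertices are partitioned into pairs
   (encoded by a fixed-point-free involution sigma on the vertex set) of
   strictly antipodal vertices {u, v} with C(u) - u = v - C(v) *)
Definition locally_point_symmetric (Q : set pt) : Prop :=
  exists sigma : pt -> pt, forall u, is_vertex Q u ->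
    [/\ is_vertex Q (sigma u), sigma u != u, sigma (sigma u) = u,
        strictly_antipodal Q u (sigma u) &
        mdiff (supp_cone Q u) [set u] = mdiff [set sigma u] (supp_cone Q (sigma u))].

Definition affine_line (T : R -> pt) (p d : pt) : Prop := forall t, T t = p + t *: d.

Definition img_int (T : R -> pt) (S : set int) : set pt := [set x | exists s : int, S s /\ x = T (s%:~R)].

End Defs.

(* Main.v *)
Require Import Defs.
From HB Require Import structures.
From mathcomp Require Import all_boot all_order all_algebra.
From mathcomp Require Import boolp classical_sets reals.
From mathcomp Require Import lra.
Import Order.TTheory GRing.Theory Num.Theory.
Local Open Scope ring_scope.
Local Open Scope classical_set_scope.

Section H.
Variables (R : realType) (D : nat).
Implicit Types (a b c x y : 'rV[R]_D).

Lemma dotB c x y : dot c (x - y) = dot c x - dot c y.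
Proof. rewrite /dot -sumrB; apply eq_bigr => i _; by rewrite !mxE mulrBr. Qed.
Lemma dotD c x y : dot c (x + y) = dot c x + dot c y.
Proof. rewrite /dot -big_split; apply eq_bigr => i _; by rewrite !mxE mulrDr. Qed.
Lemma dotZ c k x : dot c (k *: x) = k * dot c x.
Proof. rewrite /dot mulr_sumr; apply eq_bigr => i _; by rewrite !mxE mulrCA. Qed.

Lemma seg_eq (a b : 'rV[R]_D) t : (1 - t) *: a + t *: b = a + t *: (b - a).
Proof. by rewrite scalerBl scale1r scalerBr addrAC addrA. Qed.

Lemma seg_diff a b x y : segment a b x -> segment a b y -> exists r : R, x - y = r *: (b - a).
Proof.
move=> [t [_ ->]] [s [_ ->]]; exists (t - s).
by rewrite !seg_eq opprD addrACA subrr add0r scalerBl.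
Qed.

Lemma seg_l a b : segment a b a.
Proof. exists 0; split; first by rewrite lexx ler01. by rewrite subr0 scale1r scale0r addr0. Qed.
Lemma seg_r a b : segment a b b.
Proof. exists 1; split; first by rewrite ler01 lexx. by rewrite subrr scale0r scale1r add0r. Qed.

Lemma cone_step (Q : set 'rV[R]_D) u w :
  mdiff (supp_cone Q u) [set u] = mdiff [set w] (supp_cone Q w) ->
  forall x, Q x -> exists (lam : R) q, 0 <= lam /\ Q q /\ w - x = lam *: (q - u).
Proof.
move=> H x Qx.
have : mdiff [set w] (supp_cone Q w) (w - x).
  exists w, x; split=> //; split=> //.
  exists 1, x; split; first exact: ler01.
  by split=> //; rewrite scale1r addrC subrK.
rewrite -H => -[y [u' [[lam [q [l0 [Qq ->]]]] [-> e]]]].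
exists lam, q; split=> //; split=> //.
by rewrite e addrC addKr.
Qed.

Lemma dvec_eq0 c a b (mu : R) a' b' : mu != 0 -> dot c b - dot c a = 0 ->
  b - a = mu *: (b' - a') -> dot c b' - dot c a' = 0.
Proof.
move=> mun0 h e.
have : dot c (b - a) = 0 by rewrite dotB.
rewrite e dotZ dotB => /eqP; rewrite mulf_eq0 (negbTE mun0) /= => /eqP //.
Qed.
End H.
Arguments cone_step {R D Q u w}.
Arguments dvec_eq0 {R D c a b mu a' b'}.
Arguments seg_diff {R D a b x y}.

Theorem lemma5 (R : realType) (D : nat) (Q A : set 'rV[R]_D)
  (v1 v2 : 'rV[R]_D) (E1 E2 : set 'rV[R]_D) (S1 S2 : set int)
  (T1 T2 : R -> 'rV[R]_D) (p1 p2 d : 'rV[R]_D) :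
  is_polytope Q ->
  (forall v, is_vertex Q v -> intpt v) ->
  locally_point_symmetric Q ->
  A `<=` latpts Q ->
  is_vertex Q v1 -> is_vertex Q v2 ->
  strictly_antipodal Q v1 v2 ->
  is_edge Q E1 -> is_edge Q E2 -> parallel_edges E1 E2 ->
  E1 v1 -> E2 v2 ->
  affine_line T1 p1 d -> affine_line T2 p2 d ->
  injective T1 -> injective T2 ->
  A `&` E1 = img_int T1 S1 ->
  A `&` E2 = img_int T2 S2 ->
  exists (T : R -> 'rV[R]_D) (p d' : 'rV[R]_D),
    affine_line T p d' /\ injective T /\
    mdiff A A `&` mdiff E2 E1 = img_int T (mdiff S2 S1).
Proof.
move=> _ _ [sig Hsig] AsubL Hv1 Hv2 [Qv1 [Qv2 [c [cn0 [Hc1 Hc2]]]]]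
  [_ [c1 [be1 [_ [Hle1 HE1]]]]] [_ [c2 [be2 [_ [Hle2 HE2]]]]]
  [a1 [b1 [a2 [b2 [mu [Es1 [Es2 [_ [_ [mun0 Hmu]]]]]]]]]]
  E1v1 E2v2 HT1 HT2 iT1 iT2 HA1 HA2.
have E1P x : E1 x <-> Q x /\ dot c1 x = be1 by rewrite HE1.
have E2P x : E2 x <-> Q x /\ dot c2 x = be2 by rewrite HE2.
have [[Qs _] _ _ _ Hcone] := Hsig v1 Hv1.
have sv : sig v1 = v2.
  apply/eqP; apply: contraT => hne.
  have := Hc2 _ Qs hne.
  have [lam [q [l0 [Qq e]]]] := cone_step Hcone _ Qv2.
  have : dot c (sig v1 - v2) <= 0.
    rewrite e dotZ; apply: mulr_ge0_le0 => //.
    rewrite dotB subr_le0; have [->|qn] := eqVneq q v1; first exact: lexx.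
    exact/ltW/Hc1.
  by rewrite dotB subr_le0 => h1 h2; have := lt_le_trans h2 h1; rewrite ltxx.
rewrite sv in Hcone.
have F5 := cone_step Hcone.
have fv1 : dot c1 v1 = be1 by case/E1P: E1v1.
have fa1 : dot c1 a1 = be1 by have /E1P[] : E1 a1 by rewrite Es1; exact: seg_l.
have fb1 : dot c1 b1 = be1 by have /E1P[] : E1 b1 by rewrite Es1; exact: seg_r.
have f12 : dot c1 b2 - dot c1 a2 = 0.
  by apply: (dvec_eq0 mun0 _ Hmu); rewrite fa1 fb1 subrr.
have g2 : dot c2 b2 - dot c2 a2 = 0.
  have /E2P[_ ->] : E2 a2 by rewrite Es2; exact: seg_l.
  have /E2P[_ ->] : E2 b2 by rewrite Es2; exact: seg_r.
  by rewrite subrr.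
have dn0 : d != 0.
  apply: contraTneq (@oner_neq0 R) => d0.
  rewrite negbK; apply/eqP; apply: iT1; by rewrite !HT1 d0 !scaler0.
pose T t := (p2 - p1) + t *: d.
have Talg s2 s1 : T2 s2 - T1 s1 = T (s2 - s1).
  by rewrite HT2 HT1 /T scalerBl opprD addrACA.
exists T; exists (p2 - p1); exists d; split=> //; split.
  move=> t t' /addrI /eqP; rewrite -subr_eq0 -scalerBl scaler_eq0 (negbTE dn0) orbF.
  by rewrite subr_eq0 => /eqP.
apply/seteqP; split => z.
- move=> [[a [a' [Aa [Aa' ->]]]] [e2 [e1 [E2e2 [E1e1 Hz]]]]].
  have [Qa _] := AsubL _ Aa.
  have [Qa' _] := AsubL _ Aa'.
  have fa' : dot c1 a' <= be1 by apply: Hle1.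
  have [lam [q [l0 [Qq e]]]] := F5 _ Qa.
  have fvq : dot c1 (v2 - a) = lam * (dot c1 q - be1) by rewrite e dotZ dotB fv1.
  have fa : dot c1 v2 <= dot c1 a.
    rewrite -subr_le0 -dotB fvq; apply: mulr_ge0_le0 => //.
    by rewrite subr_le0; apply: Hle1.
  have fe1 : dot c1 e1 = be1 by case/E1P: E1e1.
  have fe2 : dot c1 e2 = dot c1 v2.
    have : segment a2 b2 e2 by rewrite -Es2.
    have : segment a2 b2 v2 by rewrite -Es2.
    move=> h1 h2; have [r er] := seg_diff h2 h1.
    apply/eqP; rewrite -subr_eq0 -dotB er dotZ dotB f12 mulr0 //.
  have hz : dot c1 a - dot c1 a' = dot c1 v2 - be1 by rewrite -dotB -fe1 -fe2 -dotB Hz.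
  have ea' : dot c1 a' = be1 by lra.
  have ea : dot c1 a = dot c1 v2 by lra.
  have E1a' : E1 a' by apply/E1P.
  have E2a : E2 a.
    apply/E2P; split=> //.
    have [lz|ln0] := eqVneq lam 0.
      by move: e; rewrite lz scale0r => /eqP; rewrite subr_eq0 => /eqP <-; case/E2P: E2v2.
    have fq : dot c1 q = be1.
      move: fvq; rewrite dotB ea subrr => /esym/eqP; rewrite mulf_eq0 (negbTE ln0) /=.
      by rewrite subr_eq0 => /eqP.
    have Eq : E1 q by apply/E1P.
    have : segment a1 b1 q by rewrite -Es1.
    have : segment a1 b1 v1 by rewrite -Es1.
    move=> h1 h2; have [r er] := seg_diff h2 h1.
    have : dot c2 (v2 - a) = 0.
      by rewrite e er Hmu !dotZ dotB g2 !mulr0.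
    rewrite dotB => /eqP; rewrite subr_eq0 => /eqP <-; by case/E2P: E2v2.
  have : img_int T2 S2 a by rewrite -HA2.
  have : img_int T1 S1 a' by rewrite -HA1.
  move=> [s1 [S1s1 ->]] [s2 [S2s2 ->]].
  exists (s2 - s1); split; first by exists s2, s1.
  by rewrite Talg intrB.
- move=> [s [[s2 [s1 [S2s2 [S1s1 ->]]]] ->]].
  have : img_int T2 S2 (T2 s2%:~R) by exists s2.
  have : img_int T1 S1 (T1 s1%:~R) by exists s1.
  rewrite -HA1 -HA2 => -[A1 E1x] [A2 E2x].
  rewrite intrB -Talg; split; [exists (T2 s2%:~R), (T1 s1%:~R) | exists (T2 s2%:~R), (T1 s1%:~R)]; by [].
Qed.
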